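(* Let $X$ be a finite $s$-regular graph with vertex set $X^0$ and let $\lambda_2$ be the second largest eigenvalue of its adjacency matrix. Let $0<\alpha$, let $S\subset X^0$ with $|S|\le\alpha|X^0|$, let $0<b\le s$, and let $$A=\{v\in S : |(\delta S)_v|\ge s-b\},$$ where $(\delta S)_v=\delta S\cap\delta v$. Put $\beta=\big((b-\lambda_2)-\alpha(s-\lambda_2)\big)b^{-1}$. Then $|A|\ge\beta|S|$.
   Context: For a vertex $v$, $\delta v$ is the set of edges incident to $v$. For $S\subset X^0$, $\delta S$ denotes the set of edges with one endpoint in $S$ and the other in $X^0\setminus S$. *)

(* Defs.v *)
From HB Require Import structures.
From mathcomp Require Import all_boot all_order all_algebra.
From mathcomp Require Import reals.
Set Implicit Arguments. Unset Strict Implicit. Unset Printing Implicit Defensive.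
Import Order.TTheory GRing.Theory Num.Theory.
Local Open Scope ring_scope.

Definition simple_graph (n : nat) (e : rel 'I_n) : Prop :=
  symmetric e /\ irreflexive e.

(* The neighbourhood of v, i.e. the other endpoints of the edges in delta v. *)
Definition nbhd (n : nat) (e : rel 'I_n) (v : 'I_n) : {set 'I_n} :=
  [set w | e v w].

Definition regular (n : nat) (e : rel 'I_n) (s : nat) : Prop :=
  forall v, #|nbhd e v| = s.

Definition adjmx (R : nzRingType) (n : nat) (e : rel 'I_n) : 'M[R]_n :=
  \matrix_(i, j) (e i j)%:R.

(* ev is the list of eigenvalues of M, with multiplicity, in non-increasing
   order: the roots of the characteristic polynomial. *)
Definition eigen_list (R : realFieldType) (n : nat) (M : 'M[R]_n) (ev : seq R) : Prop :=
  sorted (fun x y => y <= x) ev /\ char_poly M = \prod_(x <- ev) ('X - x%:P).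

(* |(delta S)_v| : number of edges incident to v leaving S. *)
Definition bdry_deg (n : nat) (e : rel 'I_n) (S : {set 'I_n}) (v : 'I_n) : nat :=
  #|[set w in nbhd e v | w \notin S]|.

(* Main.v *)
Require Import Defs.
From HB Require Import structures.
From mathcomp Require Import all_boot all_order all_algebra.
From mathcomp Require Import reals.
From mathcomp Require Import complex ring lra.
Import Order.TTheory GRing.Theory Num.Theory.
Local Open Scope ring_scope.

Lemma char_poly_conj (F : fieldType) n (P D : 'M[F]_n) :
  P \in unitmx -> char_poly (invmx P *m D *m P) = char_poly D.
Proof.
move=> Pu; rewrite /char_poly /char_poly_mx.
have eX : ('X%:M : 'M[{poly F}]_n) =
   map_mx polyC (invmx P) *m 'X%:M *m map_mx polyC P.
  by rewrite -mulmxA mul_scalar_mx -scalemxAr -map_mxM mulVmx // map_mx1 scalemx1.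
rewrite {1}eX !map_mxM -mulmxBl -mulmxBr !det_mulmx !det_map_mx.
rewrite mulrC mulrA -rmorphM det_inv divrr -?unitmxE // rmorph1 mul1r.
by []. Qed.

Lemma card_count n (P : pred 'I_n) : #|P| = count P (index_enum 'I_n).
Proof. by rewrite cardE -deprecated_filter_index_enum size_filter. Qed.

Lemma sorted_count (R : realType) (ev : seq R) :
  sorted (fun x y => y <= x) ev -> (count (fun t => (nth 0%R ev 1 < t)%R) ev <= 1)%N.
Proof.
case: ev => [|a [|b l]] //=; first by case: (_ < _).
move=> /andP [_ pb].
have H := order_path_min (fun x y z (h1 : x <= y) (h2 : z <= x) => le_trans h2 h1) pb.
have -> : count (fun t => b < t) l = 0%N.
  apply/eqP; rewrite eqn0Ngt -has_count; apply/hasPn => y /(allP H) hy.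
  by rewrite -leNgt.
by rewrite ltxx; case: (_ < _).
Qed.

Lemma cr (R : realType) (x : R) : Num.conj ((x%:C)%C : R[i]) = (x%:C)%C.
Proof. by rewrite /Num.conj /= oppr0. Qed.

Section Spec.
Local Open Scope sesquilinear_scope.
Variable R : realType.
Local Notation C := (R[i]).
Local Notation f := (real_complex R).

Lemma realT m k (M : 'M[R]_(m, k)) : (map_mx f M)^t* = map_mx f M^T.
Proof. by apply/matrixP => i j; rewrite !mxE cr. Qed.

Lemma trCmul m (u : 'rV[C]_m) (M : 'M[C]_m) : (u *m M^t*)^t* = M *m u^t*.
Proof.
apply/matrixP => i j; rewrite !mxE rmorph_sum; apply: eq_bigr => k _.
by rewrite !mxE rmorphM /= conjCK mulrC.
Qed.

Lemma quad_diag m (w : 'rV[C]_m) (d : 'rV[C]_m) :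
  (w *m diag_mx d *m w^t*) 0 0 = \sum_i d 0 i * (w 0 i * (w 0 i)^*).
Proof.
rewrite mul_mx_diag mxE; apply: eq_bigr => i _; rewrite !mxE.
by rewrite mulrCA mulrA.
Qed.

Lemma dotC m (w z : 'rV[C]_m) :
  (w *m z^t*) 0 0 = \sum_i w 0 i * (z 0 i)^*.
Proof. by rewrite mxE; apply: eq_bigr => i _; rewrite !mxE. Qed.

Lemma spectral_bound n (A : 'M[R]_n) (ev : seq R) (s : R) :
  A^T = A ->
  sorted (fun x y => y <= x) ev -> char_poly A = \prod_(x <- ev) ('X - x%:P) ->
  (forall t, t \in ev -> t <= s) ->
  (const_mx 1 : 'rV[R]_n) *m A = s *: const_mx 1 ->
  forall x : 'rV[R]_n, \sum_i x 0 i = 0 ->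
  (x *m A *m x^T) 0 0 <= nth 0 ev 1 * (x *m x^T) 0 0.
Proof.
move=> AT srt cp evs one_eig x x0.
set l2 := nth 0 ev 1.
pose Ac := map_mx f A.
have herm : Ac \is hermsymmx.
  apply/is_hermitianmxP; rewrite expr0 scale1r; apply/matrixP => i j.
  by rewrite !mxE cr; congr (_%:C)%C; rewrite -{1}AT mxE.
set P := spectralmx Ac; set d := spectral_diag Ac.
have Pu : P \is unitarymx := spectral_unitarymx Ac.
have PU : P \in unitmx := spectral_unit Ac.
have eA : Ac = P^t* *m diag_mx d *m P.
  by rewrite -invmx_unitary //; apply/orthomx_spectralP/hermitian_normalmx.
have PPt : P *m P^t* = 1%:M := unitarymxP Pu.
have PtP : P^t* *m P = 1%:M by rewrite -invmx_unitary // mulVmx.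
have cpd : char_poly Ac = \prod_(i < n) ('X - (d 0 i)%:P).
  rewrite eA -invmx_unitary // char_poly_conj // char_poly_trig ?diag_mx_is_trig //.
  by apply: eq_bigr => i _; rewrite mxE eqxx mulr1n.
have cpm : char_poly Ac = \prod_(y <- map f ev) ('X - y%:P).
  rewrite -map_char_poly cp rmorph_prod big_map; apply: eq_bigr => y _.
  by rewrite rmorphB /= map_polyX map_polyC.
have pe : perm_eq [seq d 0 i | i <- index_enum 'I_n] (map f ev).
  by apply: prod_XsubC_eq; rewrite big_map -cpm cpd.
have dev : forall i, exists2 t, t \in ev & d 0 i = f t.
  move=> i; have : d 0 i \in map f ev by rewrite -(perm_mem pe) map_f // mem_index_enum.
  by case/mapP => t ? ?; exists t.
have uniq2 : forall i j t u, d 0 i = f t -> d 0 j = f u -> l2 < t -> l2 < u -> i = j.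
  move=> i j t u dt du lt lu.
  have c1 : (#|[pred k | (f l2 < d 0 k)%R]| <= 1)%N.
    rewrite card_count -(count_map (fun k => d 0 k) (fun y => f l2 < y)).
    rewrite (permP pe) count_map.
    rewrite (eq_count (a2 := fun t => l2 < t)); first exact: sorted_count.
    by move=> y /=; rewrite ltcR.
  by apply: (card_le1_eqP c1); rewrite inE /= ?dt ?du ltcR.
pose one : 'rV[R]_n := const_mx 1.
pose xc := map_mx f x. pose oc := map_mx f one.
pose w := xc *m P^t*. pose z := oc *m P^t*.
have hQ : f ((x *m A *m x^T) 0 0) = \sum_i d 0 i * (w 0 i * (w 0 i)^*).
  rewrite -quad_diag.
  have -> : (w *m diag_mx d *m w^t*) = map_mx f (x *m A *m x^T).
    by rewrite /w trCmul realT !map_mxM -/Ac eA !mulmxA.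
  by rewrite [RHS]mxE.
have hN : f ((x *m x^T) 0 0) = \sum_i w 0 i * (w 0 i)^*.
  rewrite -dotC /w trCmul realT !mulmxA -(mulmxA xc) PtP mulmx1 -map_mxM.
  by rewrite [RHS]mxE.
have hz : forall i, z 0 i * d 0 i = f s * z 0 i.
  have h : z *m diag_mx d = f s *: z.
    have e1 : oc *m Ac = f s *: oc by rewrite -map_mxM one_eig map_mxZ.
    have : oc *m Ac *m P^t* = f s *: z by rewrite e1 -scalemxAl.
    by rewrite eA !mulmxA -(mulmxA _ P) PPt mulmx1.
  by move=> i; move/matrixP: h => /(_ 0 i); rewrite mul_mx_diag !mxE.
have horth : \sum_i w 0 i * (z 0 i)^* = 0.
  rewrite -dotC /w /z trCmul realT !mulmxA -(mulmxA xc) PtP mulmx1 -map_mxM mxE.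
  have -> : (x *m one^T) 0 0 = \sum_i x 0 i.
    by rewrite mxE; apply: eq_bigr => i _; rewrite !mxE mulr1.
  by rewrite x0 rmorph0.
have hzoc : z *m P = oc by rewrite /z -mulmxA PtP mulmx1.
rewrite -lecR rmorphM /= hQ hN mulr_sumr; apply: ler_sum => i _.
have [t tin dt] := dev i; rewrite dt.
case: (leP t l2) => [tl|lt].
  by rewrite ler_wpM2r ?mul_conjC_ge0 ?lecR.
suff -> : w 0 i = 0 by rewrite mul0r !mulr0.
have zsupp : forall j, z 0 j != 0 -> j = i.
  move=> j zj; have [u uin du] := dev j.
  have dj : d 0 j = f s by apply: (mulIf zj); rewrite mulrC hz.
  have us : u = s by apply: complexI; rewrite -du dj.
  apply: (uniq2 j i u t du dt) => //; rewrite us; exact: lt_le_trans lt (evs t tin).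
have zi : z 0 i != 0.
  apply/negP => /eqP zi0.
  have z0 : z = 0.
    apply/matrixP => a j; rewrite ord1 [RHS]mxE.
    have [//|zj] := eqVneq (z 0 j) 0.
    by rewrite (zsupp j zj) zi0.
  move/matrixP: hzoc => /(_ 0 i); rewrite z0 mul0mx !mxE rmorph1 => /eqP.
  by rewrite eq_sym oner_eq0.
have := horth; rewrite (bigD1 i) //= big1 ?addr0; last first.
  move=> j ji; have [->|zj] := eqVneq (z 0 j) 0; first by rewrite conjC0 mulr0.
  by rewrite (zsupp j zj) eqxx in ji.
by move=> /eqP; rewrite mulf_eq0 conjC_eq0 (negbTE zi) orbF => /eqP.
Qed.

End Spec.

Lemma eig_le (R : realType) n (A : 'M[R]_n) (s t : R) :
  (forall i j, 0 <= A i j) -> (forall j, \sum_i A i j = s) ->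
  root (char_poly A) t -> t <= s.
Proof.
move=> hA hcol; rewrite -eigenvalue_root_char => /eigenvalueP [v vA vn0].
have [j0 vj0] : exists j, v 0 j != 0.
  apply/existsP; apply: contraR vn0; rewrite negb_exists => /forallP H.
  apply/eqP/matrixP => a j; rewrite ord1 mxE; exact/eqP/negbNE/H.
pose j := Order.arg_max j0 xpredT (fun k => `|v 0 k|).
have jmax : forall k, `|v 0 k| <= `|v 0 j|.
  by rewrite /j; case: arg_maxP => // i _ H k; apply: H.
have vjpos : 0 < `|v 0 j| by apply: lt_le_trans (jmax j0); rewrite normr_gt0.
have H : `|t| * `|v 0 j| <= s * `|v 0 j|.
  move/matrixP: vA => /(_ 0 j); rewrite !mxE => e1.
  rewrite -normrM -e1 (le_trans (ler_norm_sum _ _ _)) // -(hcol j) mulr_suml.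
  apply: ler_sum => i _; rewrite normrM (ger0_norm (hA i j)) mulrC.
  by rewrite ler_wpM2l.
rewrite ler_pM2r // in H; exact: le_trans (ler_norm t) H.
Qed.

Lemma sum_pred (R : realType) n (P : pred 'I_n) :
  \sum_i ((P i)%:R : R) = #|P|%:R.
Proof.
rewrite -sum1_card GRing.natr_sum [RHS]big_mkcond /=; apply: eq_bigr => i _.
have -> : (i \in P) = P i by [].
by case: (P i).
Qed.

Lemma sum_set (R : realType) n (T : {set 'I_n}) :
  \sum_i ((i \in T)%:R : R) = #|T|%:R.
Proof. by rewrite (sum_pred R _ (fun i => i \in T)); congr _%:R; apply: eq_card. Qed.

Lemma sum_e (R : realType) n (e : rel 'I_n) j (P : pred 'I_n) :
  \sum_i ((e j i)%:R * (P i)%:R : R) = #|[set i | e j i && P i]|%:R.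
Proof.
rewrite -sum_set; apply: eq_bigr => i _; rewrite inE.
by case: (e j i); case: (P i); rewrite ?mulr1 ?mulr0 ?mul0r.
Qed.

Theorem mainTheorem7 (R : realType) (n s : nat) (e : rel 'I_n)
  (ev : seq R) (alpha b : R) (S : {set 'I_n}) :
  simple_graph e -> regular e s ->
  eigen_list (adjmx R e) ev ->
  0 < alpha -> (#|S|%:R <= alpha * n%:R) ->
  0 < b -> b <= s%:R ->
  let lambda2 := nth 0 ev 1 in
  let A := [set v in S | s%:R - b <= (bdry_deg e S v)%:R] in
  let beta := ((b - lambda2) - alpha * (s%:R - lambda2)) / b in
  beta * #|S|%:R <= #|A|%:R.
Proof.
move=> [sym irr] reg [srt cp] apos hS bpos bs; cbv zeta.
set l2 := nth 0 ev 1.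
set Aset := [set v in S | _].
pose Am := adjmx R e.
have Ae : forall i j, Am i j = (e i j)%:R by move=> i j; rewrite mxE.
have AT : Am^T = Am by apply/matrixP => i j; rewrite !mxE sym.
have rowsP : forall i (P : pred 'I_n),
    \sum_j Am i j * (P j)%:R = #|[set j | e i j && P j]|%:R.
  by move=> i P; under eq_bigr do rewrite Ae; apply: sum_e.
have row : forall i, \sum_j Am i j = s%:R.
  move=> i; transitivity (\sum_j Am i j * (xpredT j)%:R).
    by apply: eq_bigr => j _; rewrite mulr1.
  rewrite rowsP -(reg i); congr _%:R; apply: eq_card => j.
  by rewrite /nbhd !inE andbT.
have col : forall j, \sum_i Am i j = s%:R.
  by move=> j; rewrite -(row j); apply: eq_bigr => i _; rewrite !Ae sym.
have one_eig : (const_mx 1 : 'rV_n) *m Am = s%:R *: const_mx 1.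
  apply/matrixP => a j; rewrite [RHS]mxE [LHS]mxE mxE mulr1 -(col j).
  by apply: eq_bigr => i _; rewrite mxE mul1r.
have evs : forall t, t \in ev -> t <= s%:R.
  move=> t tin; apply: (@eig_le R n Am) => //.
  - by move=> i j; rewrite Ae ler0n.
  - rewrite cp /root horner_prod prodf_seq_eq0; apply/hasP; exists t => //.
    by rewrite /= hornerXsubC subrr eqxx.
have l2s : l2 <= s%:R.
  rewrite /l2; case: (ltnP 1 (size ev)) => h; first by apply: evs; apply: mem_nth.
  by rewrite nth_default // ler0n.
have [n0|npos] := posnP n.
  have S0 : #|S| = 0%N.
    by apply/eqP; rewrite -leqn0; apply: leq_trans (max_card S) _; rewrite card_ord n0.
  by rewrite S0 mulr0 ler0n.
set k := (#|S|%:R : R) in hS *.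
set N := (n%:R : R) in hS.
have Npos : 0 < N by rewrite ltr0n.
have N0 : N != 0 := lt0r_neq0 Npos.
pose c := k / N.
pose U i := ((i \in S)%:R : R).
pose bd j := ((bdry_deg e S j)%:R : R).
pose x : 'rV[R]_n := \row_i (U i - c).
have xE : forall i, x 0 i = U i - c by move=> i; rewrite mxE.
have sumU : \sum_i U i = k by apply: sum_set.
have sUc : \sum_i (U i - c) = 0.
  rewrite sumrB sumU sumr_const card_ord -mulr_natr /c divfK //.
  by rewrite subrr.
have sx : \sum_i x 0 i = 0 by rewrite -[RHS]sUc; apply: eq_bigr => i _; rewrite xE.
have hB := @spectral_bound R n Am ev s%:R AT srt cp evs one_eig x sx.
have hj : forall j, \sum_i U i * Am i j = s%:R - bd j.
  move=> j; rewrite (eq_bigr (fun i => Am j i * (mem S i)%:R)); last first.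
    by move=> i _; rewrite mulrC !Ae sym.
  rewrite rowsP -(reg j) -(cardsID S (nbhd e j)) natrD /bd /bdry_deg.
  have -> : [set w in nbhd e j | w \notin S] = nbhd e j :\: S.
    by apply/setP => w; rewrite !inE andbC.
  have -> : [set i | e j i && mem S i] = nbhd e j :&: S.
    by apply/setP => w; rewrite !inE.
  by rewrite addrK.
have g : forall j, (x *m Am) 0 j = (s%:R - bd j) - c * s%:R.
  move=> j; rewrite mxE; under eq_bigr do rewrite xE mulrBl.
  by rewrite sumrB -mulr_sumr col hj.
pose D := \sum_j bd j * U j.
have sbd : \sum_j (s%:R - bd j) = s%:R * k.
  rewrite -(eq_bigr _ (fun j _ => hj j)) exchange_big /=.
  under eq_bigr do rewrite -mulr_sumr row.
  by rewrite -mulr_suml sumU mulrC.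
have hQ : (x *m Am *m x^T) 0 0 = s%:R * k - D - c * (s%:R * k).
  rewrite mxE; under eq_bigr do rewrite g mxE xE.
  have e1 : forall j, ((s%:R - bd j) - c * s%:R) * (U j - c) =
     ((s%:R - bd j) * U j - c * (s%:R - bd j)) - c * s%:R * (U j - c).
    by move=> j; ring.
  under eq_bigr do rewrite e1.
  rewrite !sumrB -!mulr_sumr sUc sbd mulr0 subr0.
  under eq_bigr do rewrite mulrBl.
  by rewrite sumrB -mulr_sumr sumU.
have hN : (x *m x^T) 0 0 = k - c * k.
  rewrite mxE; under eq_bigr do rewrite !mxE.
  have e2 : forall j, (U j - c) * (U j - c) = (U j - c * U j) - c * (U j - c).
    by move=> j; rewrite /U; case: (j \in S) => /=; ring.
  under eq_bigr do rewrite e2.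
  by rewrite sumrB -mulr_sumr sUc mulr0 subr0 sumrB -mulr_sumr sumU.
rewrite hQ hN -/l2 in hB.
set a := (#|Aset|%:R : R).
have Db : D <= (s%:R - b) * k + b * a.
  rewrite /a -sumU -(sum_set R n Aset) !mulr_sumr -big_split /=.
  apply: ler_sum => j _; rewrite /U /bd.
  case: (boolP (j \in S)) => jS; last first.
    by rewrite /Aset inE (negbTE jS) /= !mulr0 addr0.
  rewrite /Aset inE jS /=.
  case: (boolP (s%:R - b <= (bdry_deg e S j)%:R)) => h /=; rewrite ?mulr1 ?mulr0 ?addr0.
    have : (bdry_deg e S j <= s)%N.
      by rewrite -(reg j) /bdry_deg subset_leq_card //; apply/subsetP => w; rewrite inE => /andP[].
    rewrite -(ler_nat R) => h2; lra.
  by rewrite -ltNge in h; apply/ltW.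
have cα : c <= alpha by rewrite /c ler_pdivrMr.
have k0 : 0 <= k by rewrite ler0n.
have hint : 0 <= (s%:R - l2) * k * (alpha - c).
  by rewrite !mulr_ge0 // subr_ge0.
rewrite mulrAC ler_pdivrMr //.
nra.
Qed.
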